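(* On the square graph with vertices $0,1,2,3$ (in cyclic order) over $\mathbb{F}_2$ with exterior algebra $\Omega(\mathbb{Z}_4)$, the unique quantum metric $g=e^+\otimes e^-+e^-\otimes e^+$ has exactly four QLCs, namely for $\alpha,\beta\in\{0,1\}$: $\nabla e^+=\alpha\, e^-\otimes e^-+\alpha\beta(g+e^+\otimes e^+)$, $\nabla e^-=\beta\, e^+\otimes e^++\alpha\beta(g+e^-\otimes e^-)$, with $\sigma(e^+\otimes e^+)=(1+\alpha\beta)e^+\otimes e^++\alpha\, e^-\otimes e^-$, $\sigma(e^+\otimes e^-)=(1+\alpha\beta)e^-\otimes e^++\alpha\beta\, e^+\otimes e^-$, $\sigma(e^-\otimes e^-)=(1+\alpha\beta)e^-\otimes e^-+\beta\, e^+\otimes e^+$, $\sigma(e^-\otimes e^+)=(1+\alpha\beta)e^+\otimes e^-+\alpha\beta\, e^-\otimes e^+$. All four are flat.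
   Context: $A=\mathbb{F}_2(\mathbb{Z}_4)$; $(R_\pm f)(i)=f(i\pm1)$ mod 4. The square graph has arrows $i\to i\pm1$ mod 4, and the calculus has basis over $A$ given by $e^+=01+12+23+30$, $e^-=10+21+32+03$ (here $ij$ denotes the arrow $i\to j$), with $e^\pm f=(R_\pm f)e^\pm$ and ${\rm d} f=(R_+f+f)e^++(R_-f+f)e^-$; $\Omega^1\otimes_A\Omega^1$ is free with basis $e^a\otimes e^b$. $\Omega(\mathbb{Z}_4)$ is the exterior algebra generated by $A$ and $e^\pm$ with relations $(e^+)^2=(e^-)^2=0$, $e^+\wedge e^-+e^-\wedge e^+=0$, ${\rm d} e^\pm=0$. A bimodule connection is a linear $\nabla:\Omega^1\to\Omega^1\otimes_A\Omega^1$ with $\nabla(f\omega)={\rm d} f\otimes\omega+f\nabla\omega$ and $\nabla(\omega f)=(\nabla\omega)f+\sigma(\omega\otimes{\rm d} f)$ for a bimodule map $\sigma$; it is a QLC if $T_\nabla=\wedge\nabla-{\rm d}=0$ and $(\nabla\otimes\mathrm{id}+(\sigma\otimes\mathrm{id})(\mathrm{id}\otimes\nabla))g=0$. Flat means curvature $R_\nabla=({\rm d}\otimes\mathrm{id}-(\wedge\otimes\mathrm{id})(\mathrm{id}\otimes\nabla))\nabla$ vanishes. *)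

(* Defs.v *)
From HB Require Import structures.
From mathcomp Require Import all_boot all_order all_algebra.
Set Implicit Arguments. Unset Strict Implicit. Unset Printing Implicit Defensive.
Import GRing.Theory.
Local Open Scope ring_scope.

Definition F := 'F_2.
Definition Z4 := 'Z_4.

Definition A := {ffun Z4 -> F}.

(** Signs: [true] stands for '+', [false] for '-'. *)
Definition sgn := bool.

Definition Rsh (s : sgn) (f : A) : A :=
  [ffun i : Z4 => f (i + (if s then 1 else -1))].

Definition cst (c : F) : A := [ffun _ => c].

(** Omega^1: free left A-module with basis e^+, e^-; an element
    [w] represents  w(+) e^+ + w(-) e^-. *)
Definition Om1 := {ffun sgn -> A}.
(** Omega^1 (x)_A Omega^1: free left A-module with basis e^a (x) e^b;
    [X] represents  sum_{a,b} X(a,b) e^a (x) e^b. *)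
Definition Om11 := {ffun sgn * sgn -> A}.
(** Omega^1 (x)_A Omega^1 (x)_A Omega^1 with basis e^a (x) e^b (x) e^c. *)
Definition Om111 := {ffun sgn * sgn * sgn -> A}.
(** Omega^2 is free of rank one with basis Vol := e^+ /\ e^- ; an element of
    Omega^2 is represented by its coefficient in A. *)
Definition Om2 := A.
(** Omega^2 (x)_A Omega^1 with basis Vol (x) e^c. *)
Definition Om21 := {ffun sgn -> A}.

Definition e (s : sgn) : Om1 := [ffun a => if a == s then 1 else 0].

(** bimodule structure: e^a f = (R_a f) e^a *)
Definition lmul1 (f : A) (w : Om1) : Om1 := [ffun a => f * w a].
Definition rmul1 (w : Om1) (f : A) : Om1 := [ffun a => w a * Rsh a f].
Definition lmul11 (f : A) (X : Om11) : Om11 := [ffun ab => f * X ab].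
Definition rmul11 (X : Om11) (f : A) : Om11 :=
  [ffun ab => X ab * Rsh ab.1 (Rsh ab.2 f)].

Definition tens (w v : Om1) : Om11 :=
  [ffun ab => w ab.1 * Rsh ab.1 (v ab.2)].
Definition tens21 (X : Om11) (v : Om1) : Om111 :=
  [ffun abc => X (abc.1.1, abc.1.2) * Rsh abc.1.1 (Rsh abc.1.2 (v abc.2))].
Definition tens12 (w : Om1) (Y : Om11) : Om111 :=
  [ffun abc => w abc.1.1 * Rsh abc.1.1 (Y (abc.1.2, abc.2))].
(** (Vol f) (x) v  with Vol = e^+ /\ e^- *)
Definition tens2_1 (f : Om2) (v : Om1) : Om21 :=
  [ffun c => f * Rsh true (Rsh false (v c))].

Definition d0 (f : A) : Om1 := [ffun a => Rsh a f + f].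

(** wedge product Omega^1 (x) Omega^1 -> Omega^2, using
    (e^+)^2 = (e^-)^2 = 0 and e^- /\ e^+ = - e^+ /\ e^- = - Vol. *)
Definition wedge (X : Om11) : Om2 := X (true, false) - X (false, true).
Definition wedge_id (T : Om111) : Om21 :=
  [ffun c => T (true, false, c) - T (false, true, c)].

(** coefficient one-form of e^c in the right factor: X = sum_c X_c (x) e^c *)
Definition rcoef (X : Om11) (c : sgn) : Om1 := [ffun a => X (a, c)].
Definition rcoef3 (T : Om111) (c : sgn) : Om11 :=
  [ffun ab => T (ab.1, ab.2, c)].

(** exterior derivative on Omega^1: d(f e^a) = df /\ e^a  (since d e^a = 0) *)
Definition d1 (w : Om1) : Om2 := \sum_(a : sgn) wedge (tens (d0 (w a)) (e a)).

Section Connections.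
Variables (nabla : Om1 -> Om11) (sigma : Om11 -> Om11).

Definition sigma_id (T : Om111) : Om111 :=
  \sum_(c : sgn) tens21 (sigma (rcoef3 T c)) (e c).

Definition is_bimodule_map : Prop :=
  [/\ {morph sigma : X Y / X + Y},
      forall f X, sigma (lmul11 f X) = lmul11 f (sigma X)
    & forall X f, sigma (rmul11 X f) = rmul11 (sigma X) f].

Definition is_bimodule_connection : Prop :=
  [/\ {morph nabla : w v / w + v},
      forall f w, nabla (lmul1 f w) = tens (d0 f) w + lmul11 f (nabla w),
      is_bimodule_map
    & forall w f, nabla (rmul1 w f) = rmul11 (nabla w) f + sigma (tens w (d0 f))].

Definition torsion_free : Prop := forall w, wedge (nabla w) - d1 w = 0.

Definition gmetric : Om11 := tens (e true) (e false) + tens (e false) (e true).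

Definition nabla_tens (w v : Om1) : Om111 :=
  tens21 (nabla w) v + sigma_id (tens12 w (nabla v)).

Definition metric_compatible : Prop :=
  nabla_tens (e true) (e false) + nabla_tens (e false) (e true) = 0.

Definition is_QLC : Prop :=
  [/\ is_bimodule_connection, torsion_free & metric_compatible].

(** curvature R_nabla = (d (x) id - (/\ (x) id)(id (x) nabla)) nabla,
    writing X = nabla w as sum_c X_c (x) e^c (d e^c = 0). *)
Definition curvature (w : Om1) : Om21 :=
  let X := nabla w in
  \sum_(c : sgn) tens2_1 (d1 (rcoef X c)) (e c)
  - wedge_id (\sum_(c : sgn) tens12 (rcoef X c) (nabla (e c))).

Definition flat : Prop := forall w, curvature w = 0.
End Connections.

Definition sc (c : F) (X : Om11) : Om11 := lmul11 (cst c) X.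
Definition ee (a b : sgn) : Om11 := tens (e a) (e b).

Definition nabla_ab (al be : F) (s : sgn) : Om11 :=
  if s then sc al (ee false false) + sc (al * be) (gmetric + ee true true)
  else sc be (ee true true) + sc (al * be) (gmetric + ee false false).

Definition sigma_ab (al be : F) (a b : sgn) : Om11 :=
  match a, b with
  | true, true => sc (1 + al * be) (ee true true) + sc al (ee false false)
  | true, false => sc (1 + al * be) (ee false true) + sc (al * be) (ee true false)
  | false, false => sc (1 + al * be) (ee false false) + sc be (ee true true)
  | false, true => sc (1 + al * be) (ee true false) + sc (al * be) (ee false true)
  end.

(* Main.v *)
Require Import Defs.
From HB Require Import structures.
From mathcomp Require Import all_boot all_order all_algebra.
From Stdlib Require Import Btauto.
Import GRing.Theory.
Local Open Scope ring_scope.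


Definition b2F (b : bool) : F := if b then 1 else 0.
Lemma b2F_add x y : b2F x + b2F y = b2F (x (+) y).
Proof. by case: x; case: y; apply/val_inj. Qed.
Lemma b2F_mul x y : b2F x * b2F y = b2F (x && y).
Proof. by case: x; case: y; apply/val_inj. Qed.
Lemma b2F_opp x : - b2F x = b2F x.
Proof. by case: x; apply/val_inj. Qed.
Lemma b2F_inj : injective b2F.
Proof. by case; case. Qed.
Lemma F0b : (0 : F) = b2F false. Proof. by []. Qed.
Lemma F1b : (1 : F) = b2F true. Proof. by []. Qed.
Lemma Fb (x : F) : x = b2F (x == 1).
Proof. by case: x => [[|[|//]] Hi]; apply/val_inj. Qed.
Definition bE := (b2F_add, b2F_mul, b2F_opp).
Ltac tob := rewrite ?F0b ?F1b ?bE.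

Lemma Z4cases (i : Z4) : [\/ i = 0, i = 1, i = 2 | i = 3].
Proof. case: i => [[|[|[|[|//]]]] Hi]; [constructor 1|constructor 2|constructor 3|constructor 4]; exact: val_inj. Qed.

Lemma z01 : (0 + 1 : Z4) = 1. Proof. exact: val_inj. Qed.
Lemma z11 : (1 + 1 : Z4) = 2. Proof. exact: val_inj. Qed.
Lemma z21 : (2 + 1 : Z4) = 3. Proof. exact: val_inj. Qed.
Lemma z31 : (3 + 1 : Z4) = 0. Proof. exact: val_inj. Qed.
Lemma z0m : (0 + -1 : Z4) = 3. Proof. exact: val_inj. Qed.
Lemma z1m : (1 + -1 : Z4) = 0. Proof. exact: val_inj. Qed.
Lemma z2m : (2 + -1 : Z4) = 1. Proof. exact: val_inj. Qed.
Lemma z3m : (3 + -1 : Z4) = 2. Proof. exact: val_inj. Qed.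
Definition zE := (z01, z11, z21, z31, z0m, z1m, z2m, z3m).
Lemma zs1 (i : Z4) : i + 1 + -1 = i. Proof. by rewrite addrK. Qed.
Lemma zs2 (i : Z4) : i + -1 + 1 = i. Proof. by rewrite addrNK. Qed.
Lemma zs3 (i : Z4) : i + -1 + -1 = i + 1 + 1.
Proof. rewrite -!addrA; congr (_ + _); exact: val_inj. Qed.

Definition sh (a : sgn) : Z4 := if a then 1 else -1.
Lemma shT : sh true = 1. Proof. by []. Qed.
Lemma shF : sh false = -1. Proof. by []. Qed.
Definition delta (j : Z4) : A := [ffun k => b2F (k == j)].
Definition cstb (x : bool) : A := [ffun _ => b2F x].
Definition A_of (fb : Z4 -> bool) : A := [ffun k => b2F (fb k)].
Definition Om1_of (wb : sgn -> Z4 -> bool) : Om1 := [ffun a => A_of (wb a)].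
Definition Om11_of (wb : sgn*sgn -> Z4 -> bool) : Om11 := [ffun a => A_of (wb a)].

Definition Sexp (S : sgn -> sgn -> Om11) (X : Om11) : Om11 :=
  lmul11 (X (true,true)) (S true true) + lmul11 (X (true,false)) (S true false)
  + lmul11 (X (false,true)) (S false true) + lmul11 (X (false,false)) (S false false).
Definition nexp (N : sgn -> Om11) (w : Om1) : Om11 :=
  tens (d0 (w true)) (e true) + lmul11 (w true) (N true)
  + (tens (d0 (w false)) (e false) + lmul11 (w false) (N false)).

Lemma add11E (X Y : Om11) ab i : (X + Y) ab i = X ab i + Y ab i. Proof. by rewrite !ffunE. Qed.
Lemma add1E (X Y : Om1) ab i : (X + Y) ab i = X ab i + Y ab i. Proof. by rewrite !ffunE. Qed.
Lemma add111E (X Y : Om111) ab i : (X + Y) ab i = X ab i + Y ab i. Proof. by rewrite !ffunE. Qed.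
Lemma add21E (X Y : Om21) ab i : (X + Y) ab i = X ab i + Y ab i. Proof. by rewrite !ffunE. Qed.
Lemma sub21E (X Y : Om21) ab i : (X - Y) ab i = X ab i - Y ab i. Proof. by rewrite !ffunE. Qed.
Lemma addAE (f g : A) i : (f + g) i = f i + g i. Proof. by rewrite !ffunE. Qed.
Lemma subAE (f g : A) i : (f - g) i = f i - g i. Proof. by rewrite !ffunE. Qed.
Lemma mulAE (f g : A) i : (f * g) i = f i * g i. Proof. by rewrite !ffunE. Qed.
Lemma oneAE i : (1 : A) i = 1. Proof. by rewrite !ffunE. Qed.
Lemma zeroAE i : (0 : A) i = 0. Proof. by rewrite !ffunE. Qed.
Lemma zero11E ab i : (0 : Om11) ab i = 0. Proof. by rewrite !ffunE. Qed.
Lemma zero111E ab i : (0 : Om111) ab i = 0. Proof. by rewrite !ffunE. Qed.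
Lemma zero21E ab i : (0 : Om21) ab i = 0. Proof. by rewrite !ffunE. Qed.
Lemma lmul11E f X ab i : lmul11 f X ab i = f i * X ab i. Proof. by rewrite !ffunE. Qed.
Lemma lmul1E f X a i : lmul1 f X a i = f i * X a i. Proof. by rewrite !ffunE. Qed.
Lemma rmul11E X f ab i : rmul11 X f ab i = X ab i * f (i + sh ab.1 + sh ab.2). Proof. by rewrite !ffunE. Qed.
Lemma rmul1E X f a i : rmul1 X f a i = X a i * f (i + sh a). Proof. by rewrite !ffunE. Qed.
Lemma tensE w v ab i : tens w v ab i = w ab.1 i * v ab.2 (i + sh ab.1). Proof. by rewrite !ffunE. Qed.
Lemma d0E f a i : d0 f a i = f (i + sh a) + f i. Proof. by rewrite !ffunE. Qed.
Lemma RshE s f i : Rsh s f i = f (i + sh s). Proof. by rewrite !ffunE. Qed.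
Lemma eE s a i : e s a i = b2F (a == s). Proof. by rewrite !ffunE; case: (a == s); rewrite ffunE. Qed.
Lemma deltaE j k : delta j k = b2F (k == j). Proof. by rewrite !ffunE. Qed.
Lemma cstbE x k : cstb x k = b2F x. Proof. by rewrite !ffunE. Qed.
Lemma cstE x k : cst x k = x. Proof. by rewrite !ffunE. Qed.
Lemma A_ofE fb k : A_of fb k = b2F (fb k). Proof. by rewrite !ffunE. Qed.
Lemma Om1_ofE wb a k : Om1_of wb a k = b2F (wb a k). Proof. by rewrite !ffunE. Qed.
Lemma Om11_ofE wb a k : Om11_of wb a k = b2F (wb a k). Proof. by rewrite !ffunE. Qed.
Lemma tens21E X v abc i : tens21 X v abc i = X (abc.1.1, abc.1.2) i * v abc.2 (i + sh abc.1.1 + sh abc.1.2).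
Proof. by rewrite !ffunE. Qed.
Lemma tens12E w Y abc i : tens12 w Y abc i = w abc.1.1 i * Y (abc.1.2, abc.2) (i + sh abc.1.1).
Proof. by rewrite !ffunE. Qed.
Lemma tens2_1E f v c i : tens2_1 f v c i = f i * v c (i + sh true + sh false).
Proof. by rewrite !ffunE. Qed.
Lemma rcoef3E T c ab i : rcoef3 T c ab i = T (ab.1, ab.2, c) i.
Proof. by rewrite !ffunE. Qed.
Lemma rcoefE X c a i : rcoef X c a i = X (a, c) i.
Proof. by rewrite !ffunE. Qed.
Lemma wedgeE X i : wedge X i = X (true,false) i - X (false,true) i.
Proof. by rewrite /wedge !ffunE. Qed.
Lemma wedge_idE T c i : wedge_id T c i = T (true,false,c) i - T (false,true,c) i.
Proof. by rewrite !ffunE. Qed.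
Lemma SexpE S X ab i : Sexp S X ab i = X (true,true) i * S true true ab i + X (true,false) i * S true false ab i
  + X (false,true) i * S false true ab i + X (false,false) i * S false false ab i.
Proof. by rewrite !ffunE. Qed.
Lemma scE c X ab i : sc c X ab i = c * X ab i. Proof. by rewrite !ffunE. Qed.
Lemma d1E w i : d1 w i = wedge (tens (d0 (w true)) (e true)) i + wedge (tens (d0 (w false)) (e false)) i.
Proof. by rewrite /d1 big_bool /= !ffunE. Qed.
Lemma sum111 (G : bool -> Om111) : \sum_(c : bool) G c = G true + G false.
Proof. by rewrite big_bool. Qed.
Lemma sum21 (G : bool -> Om21) : \sum_(c : bool) G c = G true + G false.
Proof. by rewrite big_bool. Qed.
Lemma eqTT : (true == true) = true. Proof. by []. Qed.
Lemma eqTF : (true == false) = false. Proof. by []. Qed.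
Lemma eqFT : (false == true) = false. Proof. by []. Qed.
Lemma eqFF : (false == false) = true. Proof. by []. Qed.
Lemma pairE (x1 y1 x2 y2 : bool) : ((x1, y1) == (x2, y2)) = (x1 == x2) && (y1 == y2). Proof. by []. Qed.
Lemma fstE (x y : bool) : (x, y).1 = x. Proof. by []. Qed.
Lemma sndE (x y : bool) : (x, y).2 = y. Proof. by []. Qed.
Lemma fstE3 (x : bool * bool) (y : bool) : (x, y).1 = x. Proof. by []. Qed.
Lemma sndE3 (x : bool * bool) (y : bool) : (x, y).2 = y. Proof. by []. Qed.

Hint Rewrite add11E add1E add111E add21E sub21E addAE subAE mulAE oneAE zeroAE zero11E zero111E zero21E
  lmul11E lmul1E rmul11E rmul1E tensE d0E RshE eE deltaE cstbE cstE A_ofE Om1_ofE Om11_ofE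
  tens21E tens12E tens2_1E rcoef3E rcoefE wedgeE wedge_idE SexpE scE d1E : evdb.
Hint Rewrite z01 z11 z21 z31 z0m z1m z2m z3m : zdb.

Lemma addb_xorb (x y : bool) : x (+) y = xorb x y. Proof. by case: x; case: y. Qed.
Ltac atomize := repeat match goal with
  | |- context [?f ?a ?b ?c ?d] => is_var f; let x := fresh "x" in move: (f a b c d) => x
  | |- context [?f ?a ?b ?c] => is_var f; let x := fresh "x" in move: (f a b c) => x
  | |- context [?f ?a ?b] => is_var f; let x := fresh "x" in move: (f a b) => x
  | |- context [?f ?a] => is_var f; let x := fresh "x" in move: (f a) => x
  end.
Ltac bdestr := atomize; repeat match goal with
  | x : bool |- _ => revert x
  end; intros; repeat match goal with x : bool |- _ => destruct x end.
Ltac bfinish := bdestr; simpl; intros; solve [reflexivity | discriminate | congruence].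
Ltac ev := autorewrite with evdb; rewrite /= ?shT ?shF ?zs1 ?zs2 ?zs3 ?zE.
Ltac beq := rewrite ?pairE ?eqTT ?eqTF ?eqFT ?eqFF.
Ltac fin := tob; apply: (congr1 b2F); beq; atomize; rewrite ?addb_xorb; simpl; btauto.


Lemma A_ofP (f : A) : exists fb, f = A_of fb.
Proof. exists (fun k => f k == 1); apply/ffunP => k; rewrite ffunE; exact: Fb. Qed.
Lemma Om1_ofP (w : Om1) : exists wb, w = Om1_of wb.
Proof. exists (fun a k => w a k == 1); apply/ffunP => a; apply/ffunP => k; rewrite !ffunE; exact: Fb. Qed.
Lemma Om11_ofP (w : Om11) : exists wb, w = Om11_of wb.
Proof. exists (fun a k => w a k == 1); apply/ffunP => a; apply/ffunP => k; rewrite !ffunE; exact: Fb. Qed.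
Lemma FP (x : F) : exists b, x = b2F b.
Proof. exists (x == 1); exact: Fb. Qed.

Lemma Om11_decomp (X : Om11) : X = lmul11 (X (true,true)) (ee true true) + lmul11 (X (true,false)) (ee true false)
  + lmul11 (X (false,true)) (ee false true) + lmul11 (X (false,false)) (ee false false).
Proof.
have [xb ->] := Om11_ofP X.
apply/ffunP => -[[] []]; apply/ffunP => k; rewrite /ee; ev; fin.
Qed.

Lemma sigma_expand (sigma : Om11 -> Om11) : is_bimodule_map sigma -> forall X,
  sigma X = Sexp (fun a b => sigma (ee a b)) X.
Proof.
case=> Hadd Hl Hr X. by rewrite {1}(Om11_decomp X) !Hadd !Hl.
Qed.

Lemma rmul1_e a f : rmul1 (e a) f = lmul1 (Rsh a f) (e a).
Proof.
have [fb ->] := A_ofP f.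
apply/ffunP => b; apply/ffunP => i; case: a; case: b; ev; fin.
Qed.

Lemma Om1_decomp (w : Om1) : w = lmul1 (w true) (e true) + lmul1 (w false) (e false).
Proof.
have [wb ->] := Om1_ofP w.
apply/ffunP => -[]; apply/ffunP => k; ev; fin.
Qed.

Lemma nabla_expand nabla sigma : is_bimodule_connection nabla sigma ->
  forall w, nabla w = nexp (fun a => nabla (e a)) w.
Proof.
case=> Hadd Hl _ _ w. by rewrite {1}(Om1_decomp w) Hadd !Hl /nexp.
Qed.


Definition Sform (nb : sgn -> sgn*sgn -> Z4 -> bool) (a b : sgn) (cd : sgn*sgn) (i : Z4) : bool :=
 ((cd == (b,a)) (+) (nb a cd i && ((cd.1 == cd.2) == (a == b)))).

Hint Rewrite add11E addAE mulAE lmul11E rmul11E tensE d0E RshE eE deltaE SexpE : dbS.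
Lemma Sval (N : sgn -> Om11) (S : sgn -> sgn -> Om11) nb sb
  (HN : forall a bc k, N a bc k = b2F (nb a bc k))
  (HS : forall a b cd k, S a b cd k = b2F (sb a b cd k))
  (HL : forall a f, tens (d0 (Rsh a f)) (e a) + lmul11 (Rsh a f) (N a) = rmul11 (N a) f + Sexp S (tens (e a) (d0 f))) :
  forall a b cd i, sb a b cd i = Sform nb a b cd i.
Proof.
move=> a b cd i.
move: (HL a (delta (i + sh a + sh b))) => /(congr1 (fun T : Om11 => T cd i)).
autorewrite with dbS. rewrite ?HN ?HS. tob. move/b2F_inj.
rewrite /Sform.
(case: (Z4cases i) => ->; case: a; case: b; case: cd => [[] []]; simpl; bfinish).
Qed.


Hint Rewrite add11E addAE subAE mulAE zeroAE wedgeE d1E tensE d0E eE : dbT.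
Lemma Tor_lem (nabla : Om1 -> Om11) (N : sgn -> Om11) (nb : sgn -> sgn*sgn -> Z4 -> bool) (HNd : forall a, nabla (e a) = N a)
  (HN : forall a bc k, N a bc k = b2F (nb a bc k)) (Ht : torsion_free nabla) :
  forall a k, nb a (false,true) k = nb a (true,false) k.
Proof.
move=> a k; move: (Ht (e a)) => /(congr1 (fun T : A => T k)).
rewrite HNd; autorewrite with dbT; rewrite ?HN; tob; move/b2F_inj.
case: a; simpl; bfinish.
Qed.

Lemma HL_lem (nabla : Om1 -> Om11) (sigma : Om11 -> Om11) : is_bimodule_connection nabla sigma ->
  forall a f, tens (d0 (Rsh a f)) (e a) + lmul11 (Rsh a f) (nabla (e a)) =
    rmul11 (nabla (e a)) f + Sexp (fun a b => sigma (ee a b)) (tens (e a) (d0 f)).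
Proof.
move=> Hc; have := Hc; case=> Hadd Hl Hb Hr a f.
by rewrite -(sigma_expand _ Hb) -Hr rmul1_e Hl.
Qed.

Hint Rewrite add111E mulAE zero111E tens21E tens12E rcoef3E SexpE eE : dbM.
Lemma sum111' (G : bool -> Om111) : \sum_(c : bool) G c = G true + G false.
Proof. by rewrite big_bool. Qed.

Definition facts (nb : sgn -> sgn*sgn -> Z4 -> bool) (i : Z4) : Prop :=
  let Pp k := nb true (true,true) k in
  let Qp k := nb true (false,false) k in
  let Mp k := nb true (true,false) k in
  let Pm k := nb false (false,false) k in
  let Qm k := nb false (true,true) k in
  let Mm k := nb false (true,false) k in
  [/\ Pp (i + -1) = Mm (i + 1), Pm (i + 1) = Mp (i + -1),
      Mm i = Mm (i + 1) && ~~ (Mp i (+) Mm i)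
    & Mp i = Mp (i + -1) && ~~ (Mp i (+) Mm i)] /\
  [/\ Qm i (+) Qm (i + 1) && ~~ Pp i (+) Mp (i + -1) && Qm i = false,
      Pm i (+) Qm (i + 1) && Qp i (+) Mp (i + -1) && ~~ Pm i = false,
      Qp i (+) Qp (i + -1) && ~~ Pm i (+) Mm (i + 1) && Qp i = false
    & Pp i (+) Qp (i + -1) && Qm i (+) Mm (i + 1) && ~~ Pp i = false].

Hint Rewrite add111E mulAE zero111E tens21E tens12E rcoef3E SexpE eE Om11_ofE : dbM.
Hint Rewrite F0b F1b b2F_add b2F_mul b2F_opp : dbB.
Definition MetB (nb : sgn -> sgn*sgn -> Z4 -> bool) (abc : sgn*sgn*sgn) (i : Z4) : bool :=
  let: (x, y, c) := abc in
  nb (~~ c) (x, y) i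
  (+) (nb false (true, c) (i + sh true) && Sform nb true true (x, y) i)
  (+) (nb false (false, c) (i + sh true) && Sform nb true false (x, y) i)
  (+) (nb true (true, c) (i + sh false) && Sform nb false true (x, y) i)
  (+) (nb true (false, c) (i + sh false) && Sform nb false false (x, y) i).

Lemma Met_eval (nabla : Om1 -> Om11) (sigma : Om11 -> Om11) (nb : sgn -> sgn*sgn -> Z4 -> bool)
  (Hsig : forall X, sigma X = Sexp (fun a b => Om11_of (Sform nb a b)) X)
  (HNd : forall a, nabla (e a) = Om11_of (nb a))
  (Hm : metric_compatible nabla sigma) : forall abc i, MetB nb abc i = false.
Proof.
move=> abc i.
have E : (nabla_tens nabla sigma (e true) (e false) + nabla_tens nabla sigma (e false) (e true)) abc i = 0.
  by rewrite Hm zero111E.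
move: E; rewrite /nabla_tens /sigma_id !sum111' !HNd !Hsig.
autorewrite with dbM dbB; move/b2F_inj => <-.
case: abc => [[x y] c]; rewrite /MetB /Sform; cbn [fst snd sh].
case: x; case: y; case: c; cbn [negb]; beq; atomize; rewrite ?addb_xorb; simpl; btauto.
Qed.

Lemma Met_facts (nb : sgn -> sgn*sgn -> Z4 -> bool)
  (Tor : forall a k, nb a (false,true) k = nb a (true,false) k)
  (Hm : forall abc i, MetB nb abc i = false) : forall i, facts nb i.
Proof.
move=> i.
move: (Hm (true,true,true) i) (Hm (false,false,true) i) (Hm (true,false,true) i) (Hm (false,true,true) i)
      (Hm (true,true,false) i) (Hm (false,false,false) i) (Hm (true,false,false) i) (Hm (false,true,false) i).
rewrite /MetB /Sform; cbn [fst snd sh negb]; beq; rewrite ?Tor.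
move=> E1 E2 E3 E4 E5 E6 E7 E8.
rewrite /facts; split; split.
- move: E3 E4; bfinish.
- move: E7 E8; bfinish.
- move: E3 E4; bfinish.
- move: E7 E8; bfinish.
- move: E1; bfinish.
- move: E2; bfinish.
- move: E6; bfinish.
- move: E5; bfinish.
Qed.


Definition specb (al be : bool) (s : sgn) (bc : sgn*sgn) : bool :=
  match s, bc with
  | true, (false, false) => al
  | false, (true, true) => be
  | _, _ => al && be
  end.

Ltac bsplit := bdestr; simpl; intros; try discriminate; repeat split.

Lemma solve_nb (nb : sgn -> sgn*sgn -> Z4 -> bool)
  (Tor : forall a k, nb a (false,true) k = nb a (true,false) k)
  (Hf : forall i, facts nb i) :
  forall s bc k, nb s bc k = specb (nb true (false,false) 0) (nb false (true,true) 0) s bc.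
Proof.
have [[A0 B0 C0 D0] [E0 F0 G0 H0]] := Hf 0.
have [[A1 B1 C1 D1] [E1 F1 G1 H1]] := Hf 1.
have [[A2 B2 C2 D2] [E2 F2 G2 H2]] := Hf 2.
have [[A3 B3 C3 D3] [E3 F3 G3 H3]] := Hf 3.
move: A0 B0 C0 D0 E0 F0 G0 H0 A1 B1 C1 D1 E1 F1 G1 H1 A2 B2 C2 D2 E2 F2 G2 H2 A3 B3 C3 D3 E3 F3 G3 H3.
rewrite ?zE.
move=> A0 B0 C0 D0 E0 F0 G0 H0 A1 B1 C1 D1 E1 F1 G1 H1 A2 B2 C2 D2 E2 F2 G2 H2 A3 B3 C3 D3 E3 F3 G3 H3.
set mu := nb true (true,false) 0.
have [Mp1 Mp2 Mp3] : [/\ nb true (true,false) 1 = mu, nb true (true,false) 2 = mu & nb true (true,false) 3 = mu].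
  by move: C0 C1 C2 C3 D0 D1 D2 D3; rewrite /mu; bsplit.
have [Mm0 Mm1 Mm2 Mm3] : [/\ nb false (true,false) 0 = mu, nb false (true,false) 1 = mu,
   nb false (true,false) 2 = mu & nb false (true,false) 3 = mu].
  by move: C0 C1 C2 C3 D0 D1 D2 D3; rewrite /mu; bsplit.
have [Pp0 Pp1 Pp2 Pp3] : [/\ nb true (true,true) 0 = mu, nb true (true,true) 1 = mu,
   nb true (true,true) 2 = mu & nb true (true,true) 3 = mu].
  by rewrite A1 A2 A3 A0.
have [Pm0 Pm1 Pm2 Pm3] : [/\ nb false (false,false) 0 = mu, nb false (false,false) 1 = mu,
   nb false (false,false) 2 = mu & nb false (false,false) 3 = mu].
  by rewrite B3 B0 B1 B2 /mu.
move: E0 F0 G0 H0 E1 F1 G1 H1 E2 F2 G2 H2 E3 F3 G3 H3.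
rewrite Mp1 Mp2 Mp3 Mm0 Mm1 Mm2 Mm3 Pp0 Pp1 Pp2 Pp3 Pm0 Pm1 Pm2 Pm3 -/mu.
move=> E0 F0 G0 H0 E1 F1 G1 H1 E2 F2 G2 H2 E3 F3 G3 H3.
set al := nb true (false,false) 0.
set be := nb false (true,true) 0.
have [Qp1 Qp2 Qp3 Hmu] : [/\ nb true (false,false) 1 = al, nb true (false,false) 2 = al,
   nb true (false,false) 3 = al & mu = al && be].
  move: E0 F0 G0 H0 E1 F1 G1 H1 E2 F2 G2 H2 E3 F3 G3 H3; rewrite /al /be; clearbody mu; bsplit.
have [Qm1 Qm2 Qm3] : [/\ nb false (true,true) 1 = be, nb false (true,true) 2 = be
   & nb false (true,true) 3 = be].
  move: E0 F0 G0 H0 E1 F1 G1 H1 E2 F2 G2 H2 E3 F3 G3 H3; rewrite /al /be; clearbody mu; bsplit.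
move=> s [b c] k.
case: (Z4cases k) => ->; case: s; case: b; case: c; rewrite /specb ?Tor -?Hmu //.
Qed.


Lemma nabla_abT al be : nabla_ab al be true = sc al (ee false false) + sc (al * be) (gmetric + ee true true).
Proof. by []. Qed.
Lemma nabla_abF al be : nabla_ab al be false = sc be (ee true true) + sc (al * be) (gmetric + ee false false).
Proof. by []. Qed.

Hint Rewrite add11E add1E add111E add21E sub21E addAE subAE mulAE oneAE zeroAE zero11E zero111E zero21E
  lmul11E lmul1E rmul11E rmul1E tensE d0E RshE eE cstE Om1_ofE Om11_ofE A_ofE
  tens21E tens12E tens2_1E rcoef3E rcoefE wedgeE wedge_idE SexpE scE d1E : dbF.
Lemma sum21' (G : bool -> Om21) : \sum_(c : bool) G c = G true + G false.
Proof. by rewrite big_bool. Qed.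
Lemma sum111'' (G : bool -> Om111) : \sum_(c : bool) G c = G true + G false.
Proof. by rewrite big_bool. Qed.

Definition nabF (al be : F) (s : sgn) (ab : sgn*sgn) : F :=
  match s, ab with | true, (false, false) => al | false, (true, true) => be | _, _ => al * be end.
Lemma nabla_abE al be s ab i : nabla_ab al be s ab i = nabF al be s ab.
Proof.
have [a ->] := FP al; have [b ->] := FP be.
rewrite /nabla_ab /gmetric /ee; case: s; case: ab => [[] []]; autorewrite with dbF; rewrite ?shT ?shF; cbn [nabF]; fin.
Qed.
Lemma nexpE N w ab i : nexp N w ab i =
  w ab.2 (i + sh ab.1) + w ab.2 i + w true i * N true ab i + w false i * N false ab i.
Proof.
have [wb ->] := Om1_ofP w; have [nb1 Hn1] := Om11_ofP (N true); have [nb2 Hn2] := Om11_ofP (N false).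
rewrite /nexp Hn1 Hn2; case: ab => [[] []]; autorewrite with dbF; fin.
Qed.
Hint Rewrite nabla_abE nexpE : dbF.

Definition sigc (al be : F) (a b : sgn) : F := match a, b with true, true => al | false, false => be | _, _ => al * be end.
Definition sigp (a b : sgn) : sgn * sgn := match a, b with true, true => (false, false) | false, false => (true, true) | _, _ => (a, b) end.
Lemma sigma_abE al be a b cd i : sigma_ab al be a b cd i =
  (1 + al * be) * b2F (cd == (b, a)) + sigc al be a b * b2F (cd == sigp a b).
Proof.
have [x ->] := FP al; have [y ->] := FP be.
rewrite /sigma_ab /sigc /sigp /ee; case: a; case: b; case: cd => [[] []]; autorewrite with dbF;
  cbn [fst snd sh negb]; fin.
Qed.
Hint Rewrite sigma_abE : dbF.

Ltac pre al be := let x := fresh "x" in let y := fresh "y" in have [x ->] := FP al; have [y ->] := FP be.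
Ltac post := cbn [fst snd sh negb nabF sigc sigp]; rewrite ?zs1 ?zs2 ?zs3; fin.
Ltac pw := let ab := fresh "ab" in apply/ffunP => ab; apply/ffunP => i; autorewrite with dbF; case: ab => [[] []]; post.
Ltac pw3 := let ab := fresh "ab" in apply/ffunP => ab; apply/ffunP => i; autorewrite with dbF; case: ab => [[[] []] []]; post.

Lemma nexp_add al be w v : nexp (nabla_ab al be) (w + v) = nexp (nabla_ab al be) w + nexp (nabla_ab al be) v.
Proof.
have [wb ->] := Om1_ofP w; have [vb ->] := Om1_ofP v. pre al be. pw.
Qed.
Lemma nexp_lmul al be f w : nexp (nabla_ab al be) (lmul1 f w) = tens (d0 f) w + lmul11 f (nexp (nabla_ab al be) w).
Proof.
have [wb ->] := Om1_ofP w; have [fb ->] := A_ofP f. pre al be. pw.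
Qed.
Lemma Sexp_add al be X Y : Sexp (sigma_ab al be) (X + Y) = Sexp (sigma_ab al be) X + Sexp (sigma_ab al be) Y.
Proof.
have [xb ->] := Om11_ofP X; have [yb ->] := Om11_ofP Y. pre al be. pw.
Qed.
Lemma Sexp_lmul al be f X : Sexp (sigma_ab al be) (lmul11 f X) = lmul11 f (Sexp (sigma_ab al be) X).
Proof.
have [xb ->] := Om11_ofP X; have [fb ->] := A_ofP f. pre al be. pw.
Qed.
Lemma Sexp_rmul al be X f : Sexp (sigma_ab al be) (rmul11 X f) = rmul11 (Sexp (sigma_ab al be) X) f.
Proof.
have [xb ->] := Om11_ofP X; have [fb ->] := A_ofP f. pre al be. pw.
Qed.
Lemma nexp_rmul al be w f : nexp (nabla_ab al be) (rmul1 w f) =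
  rmul11 (nexp (nabla_ab al be) w) f + Sexp (sigma_ab al be) (tens w (d0 f)).
Proof.
have [wb ->] := Om1_ofP w; have [fb ->] := A_ofP f. pre al be. pw.
Qed.
Lemma nexp_tor al be w : wedge (nexp (nabla_ab al be) w) - d1 w = 0.
Proof.
have [wb ->] := Om1_ofP w. pre al be. (apply/ffunP => i; autorewrite with dbF; post).
Qed.
Lemma nexp_e al be s : nexp (nabla_ab al be) (e s) = nabla_ab al be s.
Proof.
pre al be. (case: s; pw).
Qed.
Lemma Sexp_ee al be a b : Sexp (sigma_ab al be) (ee a b) = sigma_ab al be a b.
Proof.
pre al be. rewrite /ee. (case: a; case: b; pw).
Qed.
Lemma metric_unfold (nabla : Om1 -> Om11) (sigma : Om11 -> Om11) : metric_compatible nabla sigma <->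
  tens21 (nabla (e true)) (e false) +
   (tens21 (sigma (rcoef3 (tens12 (e true) (nabla (e false))) true)) (e true) +
    tens21 (sigma (rcoef3 (tens12 (e true) (nabla (e false))) false)) (e false)) +
  (tens21 (nabla (e false)) (e true) +
   (tens21 (sigma (rcoef3 (tens12 (e false) (nabla (e true))) true)) (e true) +
    tens21 (sigma (rcoef3 (tens12 (e false) (nabla (e true))) false)) (e false))) = 0.
Proof. by rewrite /metric_compatible /nabla_tens /sigma_id !sum111''. Qed.

Lemma metric_ab al be : metric_compatible (nexp (nabla_ab al be)) (Sexp (sigma_ab al be)).
Proof.
apply/metric_unfold; rewrite !nexp_e.
pre al be. pw3.
Qed.


Lemma flat_ab (nabla : Om1 -> Om11) (al be : F) (Hexp : forall w, nabla w = nexp (nabla_ab al be) w) : flat nabla.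
Proof.
move=> w; rewrite /curvature !sum21' !sum111'' !Hexp.
have [wb ->] := Om1_ofP w.
apply/ffunP => c; apply/ffunP => i.
autorewrite with dbF.
have [a ->] := FP al; have [b ->] := FP be.
(case: c; cbn [nabF fst snd sh]; rewrite ?zs1 ?zs2 ?zs3 ?zero21E; fin).
Qed.


Theorem proposition4p6 :
  (forall (nabla : Om1 -> Om11) (sigma : Om11 -> Om11),
      is_QLC nabla sigma ->
      (exists al be : F,
          (forall s, nabla (e s) = nabla_ab al be s) /\
          (forall a b, sigma (ee a b) = sigma_ab al be a b))
      /\ flat nabla)
  /\
  (forall al be : F,
      exists (nabla : Om1 -> Om11) (sigma : Om11 -> Om11),
        is_QLC nabla sigma /\ flat nabla /\
        (forall s, nabla (e s) = nabla_ab al be s) /\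
        (forall a b, sigma (ee a b) = sigma_ab al be a b)).
Proof.
split.
- move=> nabla sigma [Hc Ht Hm].
  pose nb := fun a bc k => nabla (e a) bc k == 1.
  have HN : forall a bc k, nabla (e a) bc k = b2F (nb a bc k) by move=> *; exact: Fb.
  have HNd : forall a, nabla (e a) = Om11_of (nb a).
    by move=> a; apply/ffunP => bc; apply/ffunP => k; rewrite Om11_ofE HN.
  pose sb := fun a b cd k => sigma (ee a b) cd k == 1.
  have HS : forall a b cd k, sigma (ee a b) cd k = b2F (sb a b cd k) by move=> *; exact: Fb.
  have Hb : is_bimodule_map sigma by case: Hc.
  clearbody nb sb.
  have HL := HL_lem nabla sigma Hc.
  have SV := Sval (fun a => nabla (e a)) (fun a b => sigma (ee a b)) nb sb HN HS HL.
  have HSd : forall a b, sigma (ee a b) = Om11_of (Sform nb a b).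
    by move=> a b; apply/ffunP => cd; apply/ffunP => k; rewrite Om11_ofE HS SV.
  have Hsig : forall X, sigma X = Sexp (fun a b => Om11_of (Sform nb a b)) X.
    by move=> X; rewrite (sigma_expand _ Hb X) /Sexp !HSd.
  have Tor := Tor_lem nabla (fun a => nabla (e a)) nb (fun a => erefl) HN Ht.
  have ME := Met_eval nabla sigma nb Hsig HNd Hm.
  have MF := Met_facts nb Tor ME.
  have SN := solve_nb nb Tor MF.
  move: SN; set α := nb true (false,false) 0; set β := nb false (true,true) 0.
  clearbody α β => SN.
  have HNab : forall s, nabla (e s) = nabla_ab (b2F α) (b2F β) s.
    move=> s; apply/ffunP => bc; apply/ffunP => k.
    rewrite HN SN nabla_abE; case: s; case: bc => [[] []]; cbn [specb nabF]; fin.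
  split.
  + exists (b2F α), (b2F β); split => //.
    move=> a b; apply/ffunP => cd; apply/ffunP => k.
    rewrite HS SV sigma_abE /Sform SN.
    case: a; case: b; case: cd => [[] []]; cbn [specb sigc sigp fst snd]; fin.
  + apply: (flat_ab nabla (b2F α) (b2F β)) => w.
    by rewrite (nabla_expand _ _ Hc w) /nexp !HNab.
- move=> al be.
  exists (nexp (nabla_ab al be)), (Sexp (sigma_ab al be)).
  split; [|split; [|split]].
  + split.
    * split.
      -- move=> w v; exact: nexp_add.
      -- move=> f w; exact: nexp_lmul.
      -- split.
         ++ move=> X Y; exact: Sexp_add.
         ++ move=> f X; exact: Sexp_lmul.
         ++ move=> X f; exact: Sexp_rmul.
      -- move=> w f; exact: nexp_rmul.
    * move=> w; exact: nexp_tor.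
    * exact: metric_ab.
  + exact: (flat_ab _ al be (fun w => erefl)).
  + move=> s; exact: nexp_e.
  + move=> a b; exact: Sexp_ee.
Qed.
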